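(* Let $\mathbb{H}$ be a finite-dimensional complex Hilbert space with $\dim\mathbb{H}\ge2$, let $|X\rangle\in\mathbb{H}^{\otimes3}$ be a known unit vector, let $c_1,c_2>0$, and let $\alpha,\beta$ be nonzero complex numbers with $|\alpha|^2+|\beta|^2=1$, $|\mu\rangle=\alpha|0\rangle+\beta|1\rangle\in\mathbb{C}^2$. Then there exists a probabilistic quantum transformation $\mathcal{F}$ from $\mathbb{C}^2\otimes\mathbb{H}^{\otimes2}\otimes\mathbb{H}^{\otimes2}$ to $\mathbb{H}$, independent of $\alpha,\beta,\psi,\phi$, such that for all unit vectors $|\psi\rangle,|\phi\rangle\in\mathbb{H}$ satisfying $$|\langle X|(|\psi\rangle|\phi\rangle|\psi\rangle)|^2=c_1,\qquad |\langle X|(|\phi\rangle|\psi\rangle|\phi\rangle)|^2=c_2,$$ and all such $\alpha,\beta$, one has $\mathcal{F}(\rho_\mu\otimes\rho_\psi^{\otimes2}\otimes\rho_\phi^{\otimes2})=p\,\rho_\varphi$ where $$|\varphi\rangle\propto\alpha e^{i\theta_1}|\psi\rangle+\beta e^{i\theta_2}|\phi\rangle,\quad e^{i\theta_1}=\frac{\langle X|(|\phi\rangle|\psi\rangle|\phi\rangle)}{|\langle X|(|\phi\rangle|\psi\rangle|\phi\rangle)|},\quad e^{i\theta_2}=\frac{\langle X|(|\psi\rangle|\phi\rangle|\psi\rangle)}{|\langle X|(|\psi\rangle|\phi\rangle|\psi\rangle)|},$$ with success probability $p=\frac{c_1c_2}{c_1+c_2}\,\big\|\alpha e^{i\theta_1}|\psi\rangle+\beta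 e^{i\theta_2}|\phi\rangle\big\|^2$ (assumed nonzero).
   Context: For a unit vector $|\psi\rangle$, $\rho_\psi=|\psi\rangle\langle\psi|$; $|\varphi\rangle\propto|\chi\rangle$ means $|\varphi\rangle$ is the normalization of $|\chi\rangle$ up to a global phase. A probabilistic quantum transformation from $\mathbb{H}_1$ to $\mathbb{H}_2$ is a completely positive, trace-non-increasing linear map from operators on $\mathbb{H}_1$ to operators on $\mathbb{H}_2$. *)

(* Defs.v *)
(* Complex scalars: an arbitrary numClosedFieldType C
   (e.g. algC); Hilbert space H = 'cV[C]_d. *)
From HB Require Import structures.
From mathcomp Require Import all_boot all_order all_algebra.
Set Implicit Arguments. Unset Strict Implicit. Unset Printing Implicit Defensive.
Import Order.TTheory GRing.Theory Num.Theory.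
Local Open Scope ring_scope.

Section QDefs.
Variable C : numClosedFieldType.

Definition adj m n (A : 'M[C]_(m, n)) : 'M[C]_(n, m) := (map_mx Num.conj A)^T.

Definition inner n (x y : 'cV[C]_n) : C := (adj x *m y) 0 0.

Definition norm2 n (x : 'cV[C]_n) : C := inner x x.

Definition dm n (x : 'cV[C]_n) : 'M[C]_n := x *m adj x.

(* decomposition of an index of 'I_(m*n) into a pair (inverse of mxvec_index) *)
Definition idx_pair m n (k : 'I_(m * n)) : 'I_m * 'I_n :=
  enum_val (cast_ord (esym (mxvec_cast m n)) k).

(* Kronecker (tensor) product of matrices, index (i1,i2) <-> mxvec_index i1 i2 *)
Definition kron m1 n1 m2 n2 (A : 'M[C]_(m1, n1)) (B : 'M[C]_(m2, n2))
  : 'M[C]_(m1 * m2, n1 * n2) :=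
  \matrix_(i, j) (A (idx_pair i).1 (idx_pair j).1 * B (idx_pair i).2 (idx_pair j).2).

Definition psd n (A : 'M[C]_n) : Prop :=
  forall x : 'cV[C]_n, 0 <= (adj x *m A *m x) 0 0.

(* ampliation (id_k (x) F) acting on operators on C^k (x) C^n *)
Definition ampl k n m (F : 'M[C]_n -> 'M[C]_m) (A : 'M[C]_(k * n)) : 'M[C]_(k * m) :=
  \sum_(a < k) \sum_(b < k)
     kron (delta_mx a b : 'M[C]_k)
          (F (\matrix_(i, j) A (mxvec_index a i) (mxvec_index b j))).

Definition is_linear n m (F : 'M[C]_n -> 'M[C]_m) : Prop :=
  forall (a : C) (A B : 'M[C]_n), F (a *: A + B) = a *: F A + F B.

Definition completely_positive n m (F : 'M[C]_n -> 'M[C]_m) : Prop :=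
  forall (k : nat) (A : 'M[C]_(k * n)), psd A -> psd (ampl F A).

Definition trace_nonincreasing n m (F : 'M[C]_n -> 'M[C]_m) : Prop :=
  forall A : 'M[C]_n, psd A -> \tr (F A) <= \tr A.

Definition prob_qt n m (F : 'M[C]_n -> 'M[C]_m) : Prop :=
  is_linear F /\ completely_positive F /\ trace_nonincreasing F.

Definition ket0 : 'cV[C]_2 := delta_mx 0 0.
Definition ket1 : 'cV[C]_2 := delta_mx 1 0.

End QDefs.

(* Main.v *)
Require Import Defs.
From HB Require Import structures.
From mathcomp Require Import all_boot all_order all_algebra.
From mathcomp Require Import ring.
Import Order.TTheory GRing.Theory Num.Theory.
Local Open Scope ring_scope.

Set Implicit Arguments. Unset Strict Implicit. Unset Printing Implicit Defensive.


Section Aux.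
Variable C : numClosedFieldType.

Lemma idx_pairK m n (i : 'I_m) (j : 'I_n) : idx_pair (mxvec_index i j) = (i, j).
Proof. by rewrite /idx_pair /mxvec_index cast_ordK enum_rankK. Qed.

Lemma sum_pairE m n (f : 'I_(m*n) -> C) :
  \sum_k f k = \sum_i \sum_j f (mxvec_index i j).
Proof.
rewrite (reindex (uncurry (@mxvec_index m n))) /=; last exact: curry_mxvec_bij.
by rewrite pair_big /=; apply: eq_bigr => -[i j].
Qed.

Lemma kronE m1 n1 m2 n2 (A : 'M[C]_(m1, n1)) (B : 'M[C]_(m2, n2)) i1 i2 j1 j2 :
  kron A B (mxvec_index i1 i2) (mxvec_index j1 j2) = A i1 j1 * B i2 j2.
Proof. by rewrite /kron mxE !idx_pairK. Qed.

Lemma qadjE m n (A : 'M[C]_(m, n)) i j : adj A i j = (A j i)^*.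
Proof. by rewrite /adj !mxE. Qed.

Lemma qadjK m n (A : 'M[C]_(m, n)) : adj (adj A) = A.
Proof. by apply/matrixP => i j; rewrite !qadjE conjCK. Qed.

Lemma qadjM m n p (A : 'M[C]_(m, n)) (B : 'M[C]_(n, p)) : adj (A *m B) = adj B *m adj A.
Proof.
apply/matrixP => i j; rewrite qadjE !mxE rmorph_sum; apply: eq_bigr => k _.
by rewrite !qadjE rmorphM mulrC.
Qed.

Lemma qadjD m n (A B : 'M[C]_(m, n)) : adj (A + B) = adj A + adj B.
Proof. by apply/matrixP => i j; rewrite /adj !mxE rmorphD. Qed.

Lemma qadjZ m n a (A : 'M[C]_(m, n)) : adj (a *: A) = a^* *: adj A.
Proof. by apply/matrixP => i j; rewrite /adj !mxE rmorphM. Qed.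

Lemma qadj1 n : adj (1%:M : 'M[C]_n) = 1%:M.
Proof. apply/matrixP => i j; by rewrite /adj !mxE conjC_nat eq_sym. Qed.

Lemma kronE1 m n (x : 'M[C]_(m, 1)) (y : 'M[C]_(n, 1)) i1 i2 k :
  kron x y (mxvec_index i1 i2) k = x i1 0 * y i2 0.
Proof.
rewrite /kron mxE idx_pairK /=.
by rewrite [(idx_pair k).1]ord1 [(idx_pair k).2]ord1.
Qed.

Lemma kron_dm m n (x : 'cV[C]_m) (y : 'cV[C]_n) :
  kron (dm x) (dm y) = dm (kron x y).
Proof.
apply/matrixP => r s; case/mxvec_indexP: r => i1 i2; case/mxvec_indexP: s => j1 j2.
rewrite kronE /dm !mxE !big_ord1 !qadjE !kronE1 rmorphM.
by rewrite mulrACA.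
Qed.


Definition cj n m (K : 'M[C]_(m, n)) (A : 'M[C]_n) : 'M[C]_m := K *m A *m adj K.

Lemma cj_linear n m (K : 'M[C]_(m, n)) : is_linear (cj K).
Proof. by move=> a A B; rewrite /cj mulmxDr mulmxDl -scalemxAr -scalemxAl. Qed.

Lemma psd_cj n m (K : 'M[C]_(m, n)) A : psd A -> psd (cj K A).
Proof.
move=> hA x; rewrite /cj.
have -> : adj x *m (K *m A *m adj K) *m x = adj (adj K *m x) *m A *m (adj K *m x).
  by rewrite qadjM qadjK !mulmxA.
exact: hA.
Qed.

Lemma delta_sum2 k (a b : 'I_k) (f : 'I_k -> 'I_k -> C) :
  \sum_(a' < k) \sum_(b' < k) (delta_mx a' b' : 'M[C]_k) a b * f a' b' = f a b.
Proof.
rewrite [LHS](bigD1 a) //= [X in _ + X]big1 => [|a' na]; last first.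
  by apply: big1 => b' _; rewrite mxE eq_sym (negbTE na) mul0r.
rewrite addr0 [LHS](bigD1 b) //= [X in _ + X]big1 => [|b' nb]; last first.
  by rewrite mxE eqxx /= eq_sym (negbTE nb) mul0r.
by rewrite mxE !eqxx mul1r addr0.
Qed.

Lemma ampl_cj k n m (K : 'M[C]_(m, n)) (A : 'M[C]_(k * n)) :
  ampl (cj K) A = cj (kron (1%:M : 'M[C]_k) K) A.
Proof.
apply/matrixP => r s; case/mxvec_indexP: r => a i; case/mxvec_indexP: s => b j.
rewrite /ampl summxE.
under eq_bigr do rewrite summxE.
under eq_bigr do under eq_bigr do rewrite kronE.
rewrite delta_sum2 /cj [LHS]mxE [RHS]mxE sum_pairE.
rewrite [RHS](bigD1 b) //= [X in _ + X]big1 => [|a' na]; last first.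
  by apply: big1 => t _; rewrite qadjE kronE [1%:M _ _]mxE eq_sym (negbTE na) mulr0n mul0r rmorph0 mulr0.
rewrite addr0; apply: eq_bigr => t _.
rewrite !qadjE kronE [1%:M _ _]mxE eqxx mulr1n mul1r; congr (_ * _).
rewrite !mxE sum_pairE.
rewrite [RHS](bigD1 a) //= [X in _ + X]big1 => [|a' na]; last first.
  by apply: big1 => u _; rewrite kronE [1%:M _ _]mxE eq_sym (negbTE na) mulr0n mul0r mul0r.
rewrite addr0; apply: eq_bigr => u _.
by rewrite kronE [1%:M _ _]mxE eqxx mulr1n mul1r mxE.
Qed.

Lemma cp_cj n m (K : 'M[C]_(m, n)) : completely_positive (cj K).
Proof. by move=> k A hA; rewrite ampl_cj; exact: psd_cj. Qed.


Lemma adj_delta n (i : 'I_n) : adj (delta_mx i 0 : 'cV[C]_n) = delta_mx 0 i.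
Proof. by apply/matrixP => r s; rewrite qadjE !mxE conjC_nat andbC. Qed.

Lemma psd_diag n (B : 'M[C]_n) i : psd B -> 0 <= B i i.
Proof.
by move=> /(_ (delta_mx i 0)); rewrite adj_delta -rowE -colE !mxE.
Qed.

Lemma tr_psd n (B : 'M[C]_n) : psd B -> 0 <= \tr B.
Proof. by move=> hB; apply: sumr_ge0 => i _; exact: psd_diag. Qed.

Lemma qadjN m n (A : 'M[C]_(m, n)) : adj (- A) = - adj A.
Proof. by apply/matrixP => i j; rewrite /adj !mxE rmorphN. Qed.

Lemma tni_cj n m (K : 'M[C]_(m, n)) : K *m adj K = 1%:M -> trace_nonincreasing (cj K).
Proof.
move=> hK A hA.
set L := 1%:M - adj K *m K.
have aL : adj L = L by rewrite /L qadjD qadjN qadj1 qadjM qadjK.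
have LL : L *m L = L.
  rewrite /L mulmxBl !mulmxBr !mul1mx mulmx1 mulmxA -[adj K *m K *m adj K]mulmxA hK.
  by rewrite mulmx1 subrr subr0.
rewrite -subr_ge0.
have -> : \tr A - \tr (cj K A) = \tr (cj L A).
  rewrite /cj mxtrace_mulC [\tr (L *m A *m _)]mxtrace_mulC aL !mulmxA LL.
  by rewrite /L mulmxBl mul1mx raddfB.
by apply: tr_psd; apply: psd_cj.
Qed.

End Aux.



Section Main.
Variable C : numClosedFieldType.
Variable d : nat.
Variable X : 'cV[C]_(d * d * d).
Variables w0 w1 : C.

Definition Xe (a b c : 'I_d) : C := X (mxvec_index (mxvec_index a b) c) 0.

Definition Kf (i : 'I_d) (q : 'I_2) (r1 r2 r3 r4 : 'I_d) : C :=
  if q == 0 then w0 * (Xe r3 r1 r4)^* * (r2 == i)%:R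
  else w1 * (Xe r1 r3 r2)^* * (r4 == i)%:R.

Definition Km : 'M[C]_(d, 2 * (d * d) * (d * d)) :=
  \matrix_(i, col) Kf i (idx_pair (idx_pair col).1).1
     (idx_pair (idx_pair (idx_pair col).1).2).1 (idx_pair (idx_pair (idx_pair col).1).2).2
     (idx_pair (idx_pair col).2).1 (idx_pair (idx_pair col).2).2.

Lemma KmE i q r1 r2 r3 r4 :
  Km i (mxvec_index (mxvec_index q (mxvec_index r1 r2)) (mxvec_index r3 r4)) = Kf i q r1 r2 r3 r4.
Proof. by rewrite /Km mxE !idx_pairK. Qed.

Lemma sum_col (f : 'I_(2 * (d * d) * (d * d)) -> C) :
  \sum_k f k = \sum_q \sum_r1 \sum_r2 \sum_r3 \sum_r4
     f (mxvec_index (mxvec_index q (mxvec_index r1 r2)) (mxvec_index r3 r4)).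
Proof.
rewrite sum_pairE (sum_pairE (fun qa => \sum_j f (mxvec_index qa j))).
apply: eq_bigr => q _.
rewrite (sum_pairE (fun ra => \sum_j f (mxvec_index (mxvec_index q ra) j))).
apply: eq_bigr => r1 _; apply: eq_bigr => r2 _; exact: sum_pairE.
Qed.


Lemma sum_deltaR n (i : 'I_n) (f : 'I_n -> C) : \sum_r f r * (r == i)%:R = f i.
Proof.
rewrite (bigD1 i) //= eqxx mulr1 big1 ?addr0 // => r /negbTE ->; by rewrite mulr0.
Qed.

Definition N3 := \sum_a \sum_b \sum_c (Xe a b c)^* * Xe a b c.

Lemma norm2X : norm2 X = N3.
Proof.
rewrite /norm2 /inner mxE sum_pairE sum_pairE /N3; apply: eq_bigr => a _.
apply: eq_bigr => b _; apply: eq_bigr => c _.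
by rewrite qadjE.
Qed.

Lemma KK i j : (Km *m adj Km) i j = (w0 * w0^* + w1 * w1^*) * (i == j)%:R * N3.
Proof.
rewrite mxE sum_col !big_ord_recl big_ord0 addr0.
under eq_bigr do under eq_bigr do under eq_bigr do under eq_bigr do rewrite qadjE !KmE.
under [X in _ + X]eq_bigr do under eq_bigr do under eq_bigr do under eq_bigr do rewrite qadjE !KmE.
rewrite mulrDl mulrDl; congr (_ + _).
  transitivity (\sum_r2 (\sum_r1 \sum_r3 \sum_r4 w0 * w0^* * ((Xe r3 r1 r4)^* * Xe r3 r1 r4) * (r2 == j)%:R) * (r2 == i)%:R).
    rewrite exchange_big; apply: eq_bigr => r2 _; rewrite mulr_suml; apply: eq_bigr => r1 _.
    rewrite mulr_suml; apply: eq_bigr => r3 _; rewrite mulr_suml; apply: eq_bigr => r4 _.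
    rewrite /Kf /= !rmorphM /= conjCK !conjC_nat; ring.
  rewrite sum_deltaR /N3 [LHS]exchange_big mulr_sumr; apply: eq_bigr => r3 _.
  rewrite mulr_sumr; apply: eq_bigr => r1 _; rewrite mulr_sumr; apply: eq_bigr => r4 _.
  ring.
transitivity (\sum_r1 \sum_r3 \sum_r2 \sum_r4 w1 * w1^* * ((Xe r1 r3 r2)^* * Xe r1 r3 r2) * (i == j)%:R * (r4 == i)%:R).
  apply: eq_bigr => r1 _; rewrite exchange_big; apply: eq_bigr => r3 _; apply: eq_bigr => r2 _.
  apply: eq_bigr => r4 _; rewrite /Kf /= !rmorphM /= conjCK !conjC_nat.
  by have [->|_] := eqVneq r4 i; rewrite /=; ring.
rewrite /N3 !mulr_sumr; apply: eq_bigr => r1 _; rewrite !mulr_sumr; apply: eq_bigr => r3 _.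
rewrite !mulr_sumr; apply: eq_bigr => r2 _; rewrite sum_deltaR; ring.
Qed.


Lemma inner3 (a b c : 'cV[C]_d) :
  inner X (kron (kron a b) c) = \sum_x \sum_y \sum_t (Xe x y t)^* * (a x 0 * b y 0 * c t 0).
Proof.
rewrite /inner mxE sum_pairE sum_pairE; apply: eq_bigr => x _.
apply: eq_bigr => y _; apply: eq_bigr => t _.
by rewrite qadjE !kronE1.
Qed.

Lemma Kz (mu : 'cV[C]_2) (psi phi : 'cV[C]_d) i :
  (Km *m kron (kron mu (kron psi psi)) (kron phi phi)) i 0 =
  w0 * mu ord0 0 * psi i 0 * inner X (kron (kron phi psi) phi) +
  w1 * mu (lift ord0 ord0) 0 * phi i 0 * inner X (kron (kron psi phi) psi).
Proof.
rewrite mxE sum_col !big_ord_recl big_ord0 addr0 !inner3.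
under eq_bigr do under eq_bigr do under eq_bigr do under eq_bigr do rewrite KmE !kronE1.
under [X in _ + X]eq_bigr do under eq_bigr do under eq_bigr do under eq_bigr do rewrite KmE !kronE1.
congr (_ + _).
  transitivity (\sum_r1 \sum_r2 (\sum_r3 \sum_r4 w0 * mu ord0 0 * (Xe r3 r1 r4)^* * psi r1 0 * phi r3 0 * phi r4 0) * psi r2 0 * (r2 == i)%:R).
    apply: eq_bigr => r1 _; apply: eq_bigr => r2 _; rewrite !mulr_suml.
    apply: eq_bigr => r3 _; rewrite !mulr_suml; apply: eq_bigr => r4 _.
    rewrite /Kf /=; ring.
  under eq_bigr do rewrite sum_deltaR.
  under eq_bigr do rewrite mulr_suml.
  rewrite [LHS]exchange_big [RHS]mulr_sumr; apply: eq_bigr => r3 _.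
  rewrite [RHS]mulr_sumr; apply: eq_bigr => r1 _.
  rewrite [RHS]mulr_sumr mulr_suml; apply: eq_bigr => r4 _.
  ring.
transitivity (\sum_r1 \sum_r2 \sum_r3 \sum_r4 (w1 * mu (lift ord0 ord0) 0 * (Xe r1 r3 r2)^* * psi r1 0 * psi r2 0 * phi r3 0) * phi r4 0 * (r4 == i)%:R).
  apply: eq_bigr => r1 _; apply: eq_bigr => r2 _; apply: eq_bigr => r3 _.
  apply: eq_bigr => r4 _; rewrite /Kf /=; ring.
rewrite [RHS]mulr_sumr; apply: eq_bigr => r1 _.
rewrite [RHS]mulr_sumr exchange_big; apply: eq_bigr => r3 _.
rewrite [RHS]mulr_sumr; apply: eq_bigr => r2 _.
rewrite sum_deltaR; ring.
Qed.

End Main.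

Unset Implicit Arguments. Set Strict Implicit. Set Printing Implicit Defensive.


Lemma sq_re (C : numClosedFieldType) (x : C) : 0 <= x -> sqrtC x * (sqrtC x)^* = x.
Proof. by move=> hx; rewrite geC0_conj ?sqrtC_ge0 // -expr2 sqrtCK. Qed.

Lemma dmZ (C : numClosedFieldType) n (a : C) (v : 'cV[C]_n) : dm (a *: v) = (a * a^*) *: dm v.
Proof. by rewrite /dm qadjZ -scalemxAl -scalemxAr scalerA. Qed.

Lemma norm2_ge0 (C : numClosedFieldType) n (v : 'cV[C]_n) : 0 <= norm2 v.
Proof.
rewrite /norm2 /inner mxE; apply: sumr_ge0 => i _; rewrite qadjE mulrC; exact: mul_conjC_ge0.
Qed.

Lemma abs_sqrt (C : numClosedFieldType) (z c : C) : `|z| ^+ 2 = c -> `|z| = sqrtC c.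
Proof. by move=> <-; rewrite sqrCK. Qed.

Theorem theorem8 (C : numClosedFieldType) (d : nat) (hd : (2 <= d)%N)
  (X : 'cV[C]_(d * d * d)) (hX : norm2 X = 1)
  (c1 c2 : C) (hc1 : 0 < c1) (hc2 : 0 < c2) :
  exists F : 'M[C]_(2 * (d * d) * (d * d)) -> 'M[C]_d,
    prob_qt F /\
    forall (psi phi : 'cV[C]_d) (alpha beta : C),
      norm2 psi = 1 -> norm2 phi = 1 ->
      `|inner X (kron (kron psi phi) psi)| ^+ 2 = c1 ->
      `|inner X (kron (kron phi psi) phi)| ^+ 2 = c2 ->
      alpha != 0 -> beta != 0 -> `|alpha| ^+ 2 + `|beta| ^+ 2 = 1 ->
      let mu : 'cV[C]_2 := alpha *: ket0 C + beta *: ket1 C in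
      let e1 := inner X (kron (kron phi psi) phi) / `|inner X (kron (kron phi psi) phi)| in
      let e2 := inner X (kron (kron psi phi) psi) / `|inner X (kron (kron psi phi) psi)| in
      let v : 'cV[C]_d := (alpha * e1) *: psi + (beta * e2) *: phi in
      let p := c1 * c2 / (c1 + c2) * norm2 v in
      let varphi : 'cV[C]_d := (sqrtC (norm2 v))^-1 *: v in
      p != 0 ->
      F (kron (kron (dm mu) (kron (dm psi) (dm psi))) (kron (dm phi) (dm phi)))
        = p *: dm varphi.
Proof.
have hs : 0 < c1 + c2 by rewrite addr_gt0.
have hs0 : c1 + c2 != 0 by rewrite gt_eqF.
have q1 : 0 <= c1 / (c1 + c2) by rewrite divr_ge0 // ltW.
have q2 : 0 <= c2 / (c1 + c2) by rewrite divr_ge0 // ltW.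
set w0 := sqrtC (c1 / (c1 + c2)).
set w1 := sqrtC (c2 / (c1 + c2)).
set K := Km X w0 w1.
exists (cj K); split.
  split; first exact: cj_linear.
  split; first exact: cp_cj.
  apply: tni_cj; apply/matrixP => i j.
  rewrite KK -norm2X hX mulr1 /w0 /w1 !sq_re // !mxE.
  have -> : c1 / (c1 + c2) + c2 / (c1 + c2) = 1 by field.
  by rewrite mul1r.
move=> psi phi alpha beta hpsi hphi h1 h2 ha hb hab mu e1 e2 v p varphi hp.
have cjdm : forall z, cj K (dm z) = dm (K *m z) by move=> z; rewrite /cj /dm qadjM !mulmxA.
rewrite !kron_dm cjdm.
have hk : 0 <= c1 * c2 / (c1 + c2) by rewrite divr_ge0 ?mulr_ge0 // ltW.
set s := sqrtC (c1 * c2 / (c1 + c2)).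
have sA : s = w0 * sqrtC c2.
  rewrite /s /w0 -sqrtCM ?nnegrE; [by rewrite mulrAC | exact: q1 | exact: ltW].
have sB : s = w1 * sqrtC c1.
  rewrite /s /w1 -sqrtCM ?nnegrE; [by rewrite [c2 / _ * _]mulrC mulrA | exact: q2 | exact: ltW].
have nc1 : sqrtC c1 != 0 by rewrite sqrtC_eq0 gt_eqF.
have nc2 : sqrtC c2 != 0 by rewrite sqrtC_eq0 gt_eqF.
have a1 := abs_sqrt _ _ _ h1; have a2 := abs_sqrt _ _ _ h2.
have Kzv : K *m kron (kron mu (kron psi psi)) (kron phi phi) = s *: v.
  apply/matrixP => i j; rewrite [j]ord1 Kz.
  rewrite /v /e1 /e2 /mu /ket0 /ket1 a1 a2 !mxE /=.
  rewrite !mulr1 !mulr0 addr0 add0r mulrDr {1}sA sB; field; by rewrite nc1 nc2.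
rewrite Kzv dmZ /varphi dmZ /p scalerA; congr (_ *: _).
have nn : norm2 v != 0 by move: hp; rewrite /p mulf_eq0 negb_or => /andP[].
rewrite sq_re // fmorphV -invfM sq_re ?norm2_ge0 // mulfK //.
Qed.
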